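(* For every $n \in \mathbb{N}$ and all integers $h, t$ with $0 \le h \le 4$ and $1 \le t \le F_n$: (i) $a_{5(F_{n+1}-1)+hF_n+t+1} = 5F_{n+2} - 4 + hF_{n+1} + \lfloor (F_{n+1}+1+t)\varphi \rfloor - \lfloor (F_{n+1}+1)\varphi \rfloor$; (ii) $b_{5(F_{n+1}-1)+hF_n+t+1} = 5F_{n+3} + hF_{n+2} - 3 + t + \lfloor (F_{n+1}+1+t)\varphi \rfloor - \lfloor (F_{n+1}+1)\varphi \rfloor$, where $\varphi = \frac{1+\sqrt{5}}{2}$.
   Context: Fibonacci numbers: $F_1 = F_2 = 1$, $F_{i+2} = F_{i+1} + F_i$. Let $\sigma$ be the substitution on finite sequences over $\{1,2\}$ replacing each entry $1$ by $2$ and each entry $2$ by $2,1$. Let $C_{1,1} = (1)$, $C_{i+1,1} = \sigma(C_{i,1})$. For $i \in \mathbb{N}$ let $C_i$ be the concatenation of five copies of $C_{i,1}$. Let $(c_n)_{n \in \mathbb{N}}$ be the infinite sequence obtained by concatenating $C_1, C_2, C_3, \dots$ in order, and let $d_n = c_n + 1$. Define $a_1 = 6$, $a_n = 6 + \sum_{i=1}^{n-1} c_i$, and $b_1 = 12$, $b_n = 12 + \sum_{i=1}^{n-1} d_i$ for $n \in \mathbb{N}$. *)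

(* Defs.v *)
From Stdlib Require Import Arith List ZArith Reals.
Import ListNotations.
Open Scope R_scope.

Fixpoint fib (n : nat) : nat :=
  match n with
  | O => O
  | S m => match m with
           | O => 1%nat
           | S k => (fib m + fib k)%nat
           end
  end.

Definition sigma (w : list nat) : list nat :=
  flat_map (fun x => if Nat.eqb x 1 then [2%nat] else [2%nat; 1%nat]) w.

(* Cw k = C_{k+1,1}: C_{1,1} = (1), C_{i+1,1} = sigma (C_{i,1}). *)
Fixpoint Cw (k : nat) : list nat :=
  match k with
  | O => [1%nat]
  | S k' => sigma (Cw k')
  end.

Definition Cblock (i : nat) : list nat := concat (repeat (Cw (i - 1)) 5).

Definition cprefix (m : nat) : list nat := concat (map Cblock (seq 1 m)).

(* c_n (n >= 1), the n-th entry (1-indexed) of C_1 C_2 C_3 ...;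
   the prefix C_1...C_n has length >= 5n >= n, so this is well defined. *)
Definition c (n : nat) : nat := nth (n - 1) (cprefix n) 0%nat.

Definition d (n : nat) : nat := (c n + 1)%nat.

Definition a (n : nat) : nat := (6 + fold_right plus 0 (map c (seq 1 (n - 1))))%nat.
Definition b (n : nat) : nat := (12 + fold_right plus 0 (map d (seq 1 (n - 1))))%nat.

Definition phi : R := (1 + sqrt 5) / 2.

(* floor of a real number: Int_part r = up r - 1 is the floor of r. *)
Definition floorR (r : R) : Z := Int_part r.

(* Main.v *)
Require Import Defs.
From Stdlib Require Import Arith List ZArith Reals.
From Stdlib Require Import Lra Lia Psatz.
Import ListNotations.

Definition G (m : nat) : Z := floorR (INR m * phi).
Definition Q (k m : Z) : Z := (k*k - k*m - m*m)%Z.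

Lemma Q_nonzero_aux : forall N : nat, forall m k : Z,
  (0 <= k)%Z -> (1 <= m)%Z -> (m <= Z.of_nat N)%Z -> Q k m <> 0%Z.
Proof.
  induction N as [|N IH]; intros m k Hk Hm HN HQ; unfold Q in HQ.
  - lia.
  - assert (m < k)%Z by nia.
    assert (k < 2*m)%Z by nia.
    apply (IH (k - m)%Z m); try lia.
    unfold Q. nia.
Qed.

Lemma Q_nonzero : forall m k : Z, (0 <= k)%Z -> (1 <= m)%Z -> Q k m <> 0%Z.
Proof.
  intros m k Hk Hm. apply (Q_nonzero_aux (Z.to_nat m)); lia.
Qed.

Lemma sqrt5_sq : sqrt 5 * sqrt 5 = 5.
Proof. apply sqrt_sqrt; lra. Qed.

Lemma IZR_Q : forall k m, IZR (Q k m) = IZR k * IZR k - IZR k * IZR m - IZR m * IZR m.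
Proof. intros; unfold Q; rewrite !minus_IZR, !mult_IZR; ring. Qed.

Lemma le_Q : forall k m : Z, (0 <= k)%Z -> (0 <= m)%Z ->
  IZR k <= IZR m * phi -> (Q k m <= 0)%Z.
Proof.
  intros k m Hk Hm H.
  destruct (Z_le_gt_dec (2*k - m) 0) as [H1|H1].
  - unfold Q; nia.
  - apply le_IZR. rewrite IZR_Q.
    assert (Hs := sqrt5_sq). assert (Hs0 := sqrt_pos 5).
    assert (Hx : 0 < 2 * IZR k - IZR m).
    { assert (H1b : (0 < 2*k - m)%Z) by lia. apply IZR_lt in H1b. rewrite minus_IZR, mult_IZR in H1b. lra. }
    unfold phi in H.
    assert (Hy : 0 <= IZR m) by (apply IZR_le; lia).
    assert (H2 : 2 * IZR k - IZR m <= IZR m * sqrt 5) by lra.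
    assert (H3 : (2 * IZR k - IZR m) * (2 * IZR k - IZR m) <= (IZR m * sqrt 5) * (IZR m * sqrt 5)).
    { apply Rmult_le_compat; lra. }
    replace ((IZR m * sqrt 5) * (IZR m * sqrt 5)) with (5 * (IZR m * IZR m)) in H3
      by (transitivity (IZR m * IZR m * (sqrt 5 * sqrt 5)); [rewrite Hs; ring | ring]).
    lra.
Qed.

Lemma ge_Q : forall k m : Z, (0 <= k)%Z -> (0 <= m)%Z ->
  IZR m * phi <= IZR k -> (0 <= Q k m)%Z.
Proof.
  intros k m Hk Hm H.
  apply le_IZR. rewrite IZR_Q.
  assert (Hs := sqrt5_sq). assert (Hs0 := sqrt_pos 5).
  unfold phi in H.
  assert (Hy : 0 <= IZR m) by (apply IZR_le; lia).
  assert (H0 : 0 <= IZR m * sqrt 5) by (apply Rmult_le_pos; lra).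
  assert (H2 : IZR m * sqrt 5 <= 2 * IZR k - IZR m) by lra.
  assert (H3 : (IZR m * sqrt 5) * (IZR m * sqrt 5) <= (2 * IZR k - IZR m) * (2 * IZR k - IZR m)).
  { apply Rmult_le_compat; lra. }
  replace ((IZR m * sqrt 5) * (IZR m * sqrt 5)) with (5 * (IZR m * IZR m)) in H3
    by (transitivity (IZR m * IZR m * (sqrt 5 * sqrt 5)); [rewrite Hs; ring | ring]).
  lra.
Qed.

Lemma Gspec : forall m : nat, (1 <= m)%nat ->
  (0 <= G m)%Z /\ (Q (G m) (Z.of_nat m) < 0)%Z /\ (0 < Q (G m + 1) (Z.of_nat m))%Z.
Proof.
  intros m Hm. unfold G, floorR. rewrite INR_IZR_INZ.
  set (r := IZR (Z.of_nat m) * phi).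
  destruct (base_Int_part r) as [H1 H2].
  assert (Hr : 0 <= r).
  { unfold r, phi. assert (Hs0 := sqrt_pos 5). apply Rmult_le_pos. apply IZR_le; lia. lra. }
  assert (Hg : (0 <= Int_part r)%Z).
  { assert (IZR (Int_part r) > -1) by lra. apply lt_IZR in H. lia. }

  split; [exact Hg|split].
  - assert (Q (Int_part r) (Z.of_nat m) <= 0)%Z.
    { apply le_Q; try lia. exact H1. }
    assert (Q (Int_part r) (Z.of_nat m) <> 0)%Z by (apply Q_nonzero; lia). lia.
  - assert (0 <= Q (Int_part r + 1) (Z.of_nat m))%Z.
    { apply ge_Q; try lia. rewrite plus_IZR. change (r <= IZR (Int_part r) + 1). lra. }
    assert (Q (Int_part r + 1) (Z.of_nat m) <> 0)%Z by (apply Q_nonzero; lia). lia.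
Qed.

Lemma Gval : forall (m : nat) (k : Z), (1 <= m)%nat -> (0 <= k)%Z ->
  (Q k (Z.of_nat m) < 0)%Z -> (0 < Q (k+1) (Z.of_nat m))%Z -> G m = k.
Proof.
  intros m k Hm Hk H1 H2. unfold G, floorR.
  rewrite INR_IZR_INZ.
  assert (A : IZR k <= IZR (Z.of_nat m) * phi).
  { destruct (Rle_or_lt (IZR k) (IZR (Z.of_nat m) * phi)) as [h|h]; auto.
    assert (0 <= Q k (Z.of_nat m))%Z by (apply ge_Q; lia || lra). lia. }
  assert (B : IZR (Z.of_nat m) * phi < IZR (k+1)).
  { destruct (Rle_or_lt (IZR (k+1)) (IZR (Z.of_nat m) * phi)) as [h|h]; auto.
    assert (Q (k+1) (Z.of_nat m) <= 0)%Z by (apply le_Q; lia || lra). lia. }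
  unfold Int_part.
  rewrite <- (tech_up _ (k+1)); [ring| exact B |].
  rewrite plus_IZR. lra.
Qed.

Lemma P1 : forall (k L : nat), (1 <= k)%nat -> Z.of_nat (S L) = G k ->
  G (S L) = (Z.of_nat (S L) + Z.of_nat k - 1)%Z /\
  G (S (S L)) = (Z.of_nat (S L) + Z.of_nat k + 1)%Z.
Proof.
  intros k L Hk HK.
  destruct (Gspec k Hk) as [A [B C]].
  rewrite <- HK in A, B, C. unfold Q in B, C.
  set (K := Z.of_nat (S L)) in *.
  assert (Kpos : (1 <= K)%Z) by (unfold K; lia).
  set (kk := Z.of_nat k) in *.
  assert (kpos : (1 <= kk)%Z) by (unfold kk; lia).
  assert (K < 2*kk)%Z by nia.
  assert (kk <= K)%Z by nia.
  split.
  - apply Gval; [lia|lia| |]; fold K; unfold Q; nia.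
  - apply Gval; [lia|lia| |]; replace (Z.of_nat (S (S L))) with (K+1)%Z by (unfold K; lia); unfold Q; nia.
Qed.

Lemma P2 : forall (k L : nat), (1 <= k)%nat -> Z.of_nat (S L) = G k ->
  G (S k) = (Z.of_nat (S L) + 2)%Z ->
  G (S (S (S L))) = (Z.of_nat (S L) + Z.of_nat k + 2)%Z.
Proof.
  intros k L Hk HK HK2.
  destruct (Gspec k Hk) as [A [B C]].
  destruct (Gspec (S k) ltac:(lia)) as [A' [B' C']].
  rewrite <- HK in A, B, C. rewrite HK2 in B', C'. unfold Q in B, C, B', C'.
  set (K := Z.of_nat (S L)) in *.
  assert (Kpos : (1 <= K)%Z) by (unfold K; lia).
  replace (Z.of_nat (S k)) with (Z.of_nat k + 1)%Z in B', C' by lia.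
  set (kk := Z.of_nat k) in *.
  assert (kpos : (1 <= kk)%Z) by (unfold kk; lia).
  assert (K < 2*kk)%Z by nia.
  assert (kk <= K)%Z by nia.
  apply Gval; [lia|lia| |]; replace (Z.of_nat (S (S (S L)))) with (K+2)%Z by (unfold K; lia); unfold Q; nia.
Qed.
Section Comb.
Local Open Scope nat_scope.
Local Open Scope list_scope.

Definition sumL (l : list nat) : nat := fold_right plus 0%nat l.

Lemma sumL_app : forall l1 l2, sumL (l1 ++ l2) = (sumL l1 + sumL l2)%nat.
Proof. induction l1; simpl; intros; auto. rewrite IHl1; lia. Qed.

Lemma sigma_app : forall u v, Defs.sigma (u ++ v) = Defs.sigma u ++ Defs.sigma v.
Proof. intros; unfold Defs.sigma; apply flat_map_app. Qed.

Lemma Cw_rec : forall k, Cw (S (S k)) = Cw (S k) ++ Cw k.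
Proof.
  induction k. reflexivity.
  change (Cw (S (S (S k)))) with (Defs.sigma (Cw (S (S k)))).
  rewrite IHk at 1. rewrite sigma_app. reflexivity.
Qed.

Lemma Cw_len_sum : forall k, length (Cw k) = fib (S k) /\ sumL (Cw k) = fib (S (S k)).
Proof.
  assert (H : forall k, (length (Cw k) = fib (S k) /\ sumL (Cw k) = fib (S (S k))) /\
                        (length (Cw (S k)) = fib (S (S k)) /\ sumL (Cw (S k)) = fib (S (S (S k))))).
  { induction k. split; split; reflexivity.
    destruct IHk as [[A B] [C D]]. split. split; auto.
    rewrite Cw_rec, length_app, sumL_app. split.
    - rewrite C, A. change (fib (S (S (S k)))) with (fib (S (S k)) + fib (S k))%nat. lia.
    - rewrite D, B. change (fib (S (S (S (S k))))) with (fib (S (S (S k))) + fib (S (S k)))%nat. lia. }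
  intro k; apply H.
Qed.

Definition is12 (x : nat) := x = 1%nat \/ x = 2%nat.

Lemma sigma_12 : forall w, Forall is12 (Defs.sigma w).
Proof.
  induction w. constructor. unfold Defs.sigma; simpl. fold (Defs.sigma w).
  apply Forall_app; split; auto.
  destruct (Nat.eqb a 1); repeat apply Forall_cons; try apply Forall_nil; unfold is12; auto.
Qed.

Lemma Cw_12 : forall k, Forall is12 (Cw k).
Proof. destruct k. repeat apply Forall_cons; try apply Forall_nil; unfold is12; auto. apply sigma_12. Qed.

Lemma sigma_len : forall w, Forall is12 w -> length (Defs.sigma w) = sumL w.
Proof.
  induction w; intros H. reflexivity. inversion H; subst.
  unfold Defs.sigma; simpl. fold (Defs.sigma w). rewrite length_app, IHw by auto.
  destruct H2 as [-> | ->]; simpl; lia.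
Qed.

Definition Good (w : list nat) : Prop :=
  forall t, (t <= length w)%nat -> Z.of_nat (sumL (firstn t w)) = (G (S t) - 1)%Z.

Lemma Good_prefix : forall w x, Good (w ++ [x]) -> Good w.
Proof.
  intros w x H t Ht. rewrite <- (H t) by (rewrite length_app; lia).
  rewrite firstn_app. replace (t - length w)%nat with 0%nat by lia. rewrite app_nil_r; auto.
Qed.

Lemma G1 : G 1 = 1%Z.
Proof. apply Gval; unfold Q; simpl; lia. Qed.
Lemma G2 : G 2 = 3%Z.
Proof. apply Gval; unfold Q; simpl; lia. Qed.

Lemma Good_sigma : forall w, Forall is12 w -> Good w -> Good (Defs.sigma w).
Proof.
  induction w as [|x w IH] using rev_ind; intros H12 HG.
  - intros t Ht. simpl in Ht. replace t with 0%nat by lia. simpl. rewrite G1. reflexivity.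
  - apply Forall_app in H12. destruct H12 as [Hw Hx]. inversion Hx; subst.
    assert (HGw := Good_prefix _ _ HG).
    specialize (IH Hw HGw).
    set (T := length w).
    assert (E1 := HG T ltac:(unfold T; rewrite length_app; lia)).
    assert (E2 := HG (S T) ltac:(unfold T; rewrite length_app; simpl; lia)).
    rewrite firstn_all2 in E2 by (rewrite length_app; simpl; unfold T; lia).
    rewrite firstn_app, firstn_all2 in E1 by (unfold T; lia).
    replace (T - length w)%nat with 0%nat in E1 by (unfold T; lia).
    rewrite app_nil_r in E1. rewrite sumL_app in E2. simpl in E1, E2.
    set (L := sumL w) in *.
    assert (HL : length (Defs.sigma w) = L) by (apply sigma_len; auto).
    assert (ES := IH L ltac:(lia)).
    rewrite firstn_all2 in ES by lia.
    assert (HK : Z.of_nat (S L) = G (S T)) by lia.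
    destruct (P1 (S T) L ltac:(lia) HK) as [Q1 Q2].
    rewrite sigma_app. intros t Ht.
    rewrite length_app in Ht.
    destruct (le_lt_dec t L) as [Hle|Hlt].
    + rewrite firstn_app. replace (t - length (Defs.sigma w))%nat with 0%nat by lia.
      rewrite app_nil_r. apply IH. lia.
    + rewrite firstn_app, (firstn_all2 (Defs.sigma w)) by lia. rewrite sumL_app.
      destruct H1 as [-> | ->].
      * simpl in Ht. replace t with (S L) by lia. rewrite HL.
        replace (S L - L)%nat with 1%nat by lia. simpl. lia.
      * simpl in Ht. assert (t = S L \/ t = S (S L))%nat as [-> | ->] by lia; rewrite HL.
        -- replace (S L - L)%nat with 1%nat by lia. simpl. lia.
        -- replace (S (S L) - L)%nat with 2%nat by lia.
           assert (HK2 : G (S (S T)) = (Z.of_nat (S L) + 2)%Z) by lia.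
           assert (Q3 := P2 (S T) L ltac:(lia) HK HK2). simpl. lia.
Qed.

Lemma Good_Cw : forall m, Good (Cw (S m)).
Proof.
  induction m.
  - intros t Ht. simpl in Ht. destruct t as [|[|t]]; simpl.
    + rewrite G1; reflexivity.
    + rewrite G2; reflexivity.
    + lia.
  - change (Cw (S (S m))) with (Defs.sigma (Cw (S m))). apply Good_sigma; auto. apply Cw_12.
Qed.

Lemma fib_SS : forall k, fib (S (S k)) = fib (S k) + fib k.
Proof. reflexivity. Qed.

Lemma fib_ge : forall k, S k <= fib (S (S k)) /\ S (S k) <= fib (S (S (S k))).
Proof.
  induction k. simpl; lia.
  destruct IHk as [A B]. split; auto. rewrite (fib_SS (S (S k))). rewrite fib_SS in B |- *. 
  assert (1 <= fib (S k)) by (destruct k; simpl in *; lia). lia.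
Qed.

Lemma cprefix_S : forall m, cprefix (S m) = cprefix m ++ Cblock (S m).
Proof.
  intro m. unfold cprefix. rewrite seq_S, map_app, concat_app. simpl. rewrite app_nil_r. reflexivity.
Qed.

Lemma concat_rep : forall (w : list nat) h,
  length (concat (repeat w h)) = h * length w /\ sumL (concat (repeat w h)) = h * sumL w.
Proof.
  induction h; simpl. auto. rewrite length_app, sumL_app. destruct IHh as [-> ->]. lia.
Qed.

Lemma Cblock_ls : forall m, length (Cblock (S m)) = 5 * fib (S m) /\ sumL (Cblock (S m)) = 5 * fib (S (S m)).
Proof.
  intro m. unfold Cblock. replace (S m - 1) with m by lia.
  destruct (concat_rep (Cw m) 5) as [-> ->]. destruct (Cw_len_sum m) as [-> ->]. auto.
Qed.

Lemma cprefix_ls : forall m, length (cprefix m) + 5 = 5 * fib (S (S m)) /\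
                              sumL (cprefix m) + 10 = 5 * fib (S (S (S m))).
Proof.
  induction m. simpl; auto.
  rewrite cprefix_S, length_app, sumL_app. destruct (Cblock_ls m) as [-> ->].
  destruct IHm as [A B]. rewrite (fib_SS (S m)), (fib_SS (S (S m))). lia.
Qed.

Lemma cprefix_ext : forall i j, exists r, cprefix (i + j) = cprefix i ++ r.
Proof.
  intros i j. induction j. exists []. rewrite Nat.add_0_r, app_nil_r. auto.
  destruct IHj as [r Hr]. exists (r ++ Cblock (S (i + j))).
  rewrite <- plus_n_Sm, cprefix_S, Hr, app_assoc. auto.
Qed.

Lemma cprefix_len_ge : forall i, i <= length (cprefix i).
Proof.
  intro i. destruct (cprefix_ls i) as [A _]. destruct i. simpl; lia.
  destruct (fib_ge i) as [_ B]. lia.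
Qed.

Lemma c_eq : forall i M, 1 <= i <= M -> c i = nth (i - 1) (cprefix M) 0.
Proof.
  intros i M H. unfold c. destruct (cprefix_ext i (M - i)) as [r Hr].
  replace (i + (M - i)) with M in Hr by lia. rewrite Hr, app_nth1; auto.
  assert (Hl := cprefix_len_ge i). lia.
Qed.

Lemma firstn_S_nth : forall (l : list nat) j, j < length l ->
  firstn (S j) l = firstn j l ++ [nth j l 0].
Proof.
  induction l; intros j H. simpl in H; lia.
  destruct j. reflexivity. change (a :: firstn (S j) l = (a :: firstn j l) ++ [nth j l 0]). rewrite IHl. reflexivity. simpl in H; lia.
Qed.

Lemma sum_c : forall j M, j <= M ->
  fold_right plus 0 (map c (seq 1 j)) = sumL (firstn j (cprefix M)).
Proof.
  induction j; intros M H. reflexivity.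
  rewrite seq_S, map_app. change (fold_right plus 0 (map c (seq 1 j) ++ map c [1 + j]))
    with (sumL (map c (seq 1 j) ++ map c [1 + j])).
  rewrite sumL_app. change (sumL (map c (seq 1 j))) with (fold_right plus 0 (map c (seq 1 j))).
  rewrite (IHj M) by lia.
  assert (Hl := cprefix_len_ge M).
  rewrite firstn_S_nth by lia. rewrite sumL_app. simpl.
  rewrite (c_eq (S j) M) by lia. replace (S j - 1) with j by lia. lia.
Qed.

Lemma sum_d : forall j,
  fold_right plus 0 (map d (seq 1 j)) = fold_right plus 0 (map c (seq 1 j)) + j.
Proof.
  induction j. reflexivity.
  rewrite seq_S, !map_app, !fold_right_app. simpl.
  assert (forall l x, fold_right plus x l = fold_right plus 0 l + x).
  { induction l; simpl; intros; auto. rewrite IHl. lia. }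
  rewrite (H (map d _)), (H (map c _)), IHj. unfold d. lia.
Qed.

Lemma a_formula : forall N1, a (N1 + 1) = 6 + sumL (firstn N1 (cprefix N1)).
Proof.
  intro N1. unfold a. replace (N1 + 1 - 1) with N1 by lia. rewrite (sum_c N1 N1); auto.
Qed.

Lemma b_formula : forall N1, b (N1 + 1) = 12 + sumL (firstn N1 (cprefix N1)) + N1.
Proof.
  intro N1. unfold b. replace (N1 + 1 - 1) with N1 by lia. rewrite sum_d, (sum_c N1 N1); lia.
Qed.

Lemma core : forall n h t, 1 <= n -> h <= 4 -> 1 <= t -> t <= fib n ->
  exists P, 
    sumL (firstn (5 * (fib (n + 1) - 1) + h * fib n + t) (cprefix (5 * (fib (n + 1) - 1) + h * fib n + t)))
      = 5 * fib (n + 2) - 10 + h * fib (n + 1) + P /\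
    5 * fib (n+2) >= 10 /\
    Z.of_nat P = (G (fib (n + 1) + 1 + t) - G (fib (n + 1) + 1))%Z.
Proof.
  intros n h t Hn Hh Ht Htn.
  destruct n as [|m]; [lia|].
  replace (S m + 1) with (S (S m)) by lia.
  replace (S m + 2) with (S (S (S m))) by lia.
  set (N1 := 5 * (fib (S (S m)) - 1) + h * fib (S m) + t).
  destruct (cprefix_ls m) as [L1 S1].
  destruct (cprefix_ls (S m)) as [L2 S2].
  destruct (Cw_len_sum m) as [Lw Sw].
  destruct (Cw_len_sum (S m)) as [Lw1 Sw1].
  assert (F3 := fib_SS (S m)).
  assert (F4 := fib_SS (S (S m))).
  assert (Hfm : m <= fib (S m)) by (clear -m; destruct m; [simpl; lia| destruct (fib_ge m) as [X1 X2]; simpl in X1 |- *; lia]).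
  assert (HN : S m <= N1) by (destruct (fib_ge m) as [X _]; unfold N1; lia).
  assert (Hhf : h * fib (S m) <= 4 * fib (S m)) by (apply Nat.mul_le_mono_r; lia).
  destruct (cprefix_ext (S m) (N1 - S m)) as [r Hr].
  replace (S m + (N1 - S m)) with N1 in Hr by lia.
  rewrite Hr, firstn_app, (cprefix_S m), firstn_app.
  replace (N1 - length (cprefix m ++ Cblock (S m))) with 0 by (rewrite length_app, (proj1 (Cblock_ls m)); unfold N1; lia).
  rewrite firstn_all2 by (unfold N1; lia).
  replace (N1 - length (cprefix m)) with (h * fib (S m) + t) by (unfold N1; lia).
  unfold Cblock. replace (S m - 1) with m by lia.
  replace (repeat (Cw m) 5) with (repeat (Cw m) (h + S (4 - h))) by (f_equal; lia).
  rewrite repeat_app, concat_app. simpl (repeat (Cw m) (S (4 - h))). simpl concat.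
  rewrite firstn_app.
  destruct (concat_rep (Cw m) h) as [Lc Sc].
  rewrite firstn_all2 by lia. rewrite Lc, Lw.
  replace (h * fib (S m) + t - h * fib (S m)) with t by lia.
  rewrite firstn_app. replace (t - length (Cw m)) with 0 by lia.
  simpl firstn at 2. rewrite app_nil_r.
  exists (sumL (firstn t (Cw m))).
  rewrite !sumL_app, Sc, Sw. change (sumL []) with 0. destruct (fib_ge m) as [X1 X2]. split; [|split]; [lia|lia|].
  assert (HG := Good_Cw (S m)). rewrite Cw_rec in HG.
  assert (E1 := HG (fib (S (S m))) ltac:(rewrite length_app; lia)).
  assert (E2 := HG (fib (S (S m)) + t) ltac:(rewrite length_app; lia)).
  rewrite firstn_app, firstn_all2, sumL_app in E1 by lia.
  rewrite firstn_app, firstn_all2, sumL_app in E2 by lia.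
  replace (fib (S (S m)) - length (Cw (S m))) with 0 in E1 by lia.
  replace (fib (S (S m)) + t - length (Cw (S m))) with t in E2 by lia.
  simpl (firstn 0 _) in E1. simpl (sumL []) in E1.
  replace (fib (S (S m)) + 1 + t) with (S (fib (S (S m)) + t)) by lia.
  replace (fib (S (S m)) + 1) with (S (fib (S (S m)))) by lia.
  lia.
Qed.
End Comb.

Theorem theorem4p4 :
  forall n h t : nat,
    (1 <= n)%nat -> (h <= 4)%nat -> (1 <= t)%nat -> (t <= fib n)%nat ->
    Z.of_nat (a (5 * (fib (n + 1) - 1) + h * fib n + t + 1)) =
      (5 * Z.of_nat (fib (n + 2)) - 4 + Z.of_nat h * Z.of_nat (fib (n + 1))
       + floorR (INR (fib (n + 1) + 1 + t) * phi)
       - floorR (INR (fib (n + 1) + 1) * phi))%Z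
    /\
    Z.of_nat (b (5 * (fib (n + 1) - 1) + h * fib n + t + 1)) =
      (5 * Z.of_nat (fib (n + 3)) + Z.of_nat h * Z.of_nat (fib (n + 2)) - 3
       + Z.of_nat t
       + floorR (INR (fib (n + 1) + 1 + t) * phi)
       - floorR (INR (fib (n + 1) + 1) * phi))%Z.
Proof.
  intros n h t Hn Hh Ht Htn.
  destruct (core n h t Hn Hh Ht Htn) as [P [HS [H10 HP]]].
  unfold G in HP.
  assert (F3 : fib (n+3) = (fib (n+2) + fib (n+1))%nat).
  { replace (n+3)%nat with (S (S (n+1))) by lia. rewrite fib_SS. f_equal; f_equal; lia. }
  assert (F2 : fib (n+2) = (fib (n+1) + fib n)%nat).
  { replace (n+2)%nat with (S (S n)) by lia. rewrite fib_SS. f_equal; f_equal; lia. }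
  assert (F1 : (1 <= fib (n+1))%nat).
  { destruct n as [|m]. lia. replace (S m + 1)%nat with (S (S m)) by lia. destruct (fib_ge m); lia. }
  rewrite a_formula, b_formula, HS.
  rewrite F3. rewrite F2 in *. split; nia.
Qed.
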